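(* Let $C$ be the Cantor set, $\psi_{\mathcal{H}}$ an increasing submodular setfunction on the clopen subsets of $C$ with $\psi_{\mathcal{H}}(\emptyset)=0$, let $\psi_{\mathcal{K}}(K)=\inf\{\psi_{\mathcal{H}}(H)\colon H \text{ clopen},\ K\subseteq H\}$ for compact $K\subseteq C$, and let $\psi_{\mathcal{B}}(B)=\sup\{\psi_{\mathcal{K}}(K)\colon K\subseteq B \text{ compact}\}$ for Borel $B\subseteq C$. Let $q\in\mathbb{N}$ and let $F\colon C\to[q]$ be Borel measurable. Then for every $\varepsilon>0$ there exists a continuous map $G\colon C\to[q]$ such that $d(\psi_{\mathcal{B}}\circ F^{-1},\psi_{\mathcal{B}}\circ G^{-1})<\varepsilon$.
   Context: A setfunction is increasing if $X\subseteq Y$ implies $\varphi(X)\le\varphi(Y)$ and submodular if $\varphi(X)+\varphi(Y)\ge\varphi(X\cap Y)+\varphi(X\cup Y)$. For a setfunction $\varphi$ on a set-algebra $(J,\mathcal{B})$ and a map $F\colon J\to[k]$ with $F^{-1}(i)\in\mathcal{B}$, $\varphi\circ F^{-1}$ is the setfunction $A\mapsto\varphi(F^{-1}(A))$ on $2^{[k]}$ (a quotient of $\varphi$); $Q_k(\varphi)\subseteq\mathbb{R}^{2^k}$ is the set of all quotients of $\varphi$ on $[k]$. The pseudometric $d$ between setfunctions is $d(\varphi_1,\varphi_2)=\sum_{k=1}^\infty 2^{-k}d_H^{(k)}(Q_k(\varphi_1),Q_k(\varphi_2))$, where $d_H^{(k)}$ is the Hausdorff distance in Euclidean $\mathbb{R}^{2^k}$.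 ($[q]$ carries the discrete topology.) *)

(* Defs.v *)
From HB Require Import structures.
From mathcomp Require Import all_boot all_order all_algebra.
From mathcomp Require Import all_classical all_reals all_analysis.
Set Implicit Arguments. Unset Strict Implicit. Unset Printing Implicit Defensive.
Import Order.TTheory GRing.Theory Num.Theory.
Local Open Scope classical_set_scope.
Local Open Scope ring_scope.

Notation C := cantor_space.

Definition clopen (A : set C) : Prop := open A /\ closed A.

Definition borel (B : set C) : Prop := <<s [set U : set C | open U] >> B.

Section SetFun.
Variable R : realType.

Definition increasing_on_clopen (psi : set C -> R) : Prop :=
  forall X Y, clopen X -> clopen Y -> X `<=` Y -> psi X <= psi Y.

Definition submodular_on_clopen (psi : set C -> R) : Prop :=
  forall X Y, clopen X -> clopen Y ->
    psi (X `&` Y) + psi (X `|` Y) <= psi X + psi Y.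

Definition psiK (psiH : set C -> R) (K : set C) : R :=
  inf [set psiH H | H in [set H | clopen H /\ K `<=` H]].

Definition psiB (psiH : set C -> R) (B : set C) : R :=
  sup [set psiK psiH K | K in [set K | compact K /\ K `<=` B]].

Definition borel_map (q : nat) (F : C -> 'I_q) : Prop :=
  forall i : 'I_q, borel (F @^-1` [set i]).

Definition continuous_discrete (q : nat) (G : C -> 'I_q) : Prop :=
  forall A : set 'I_q, open (G @^-1` A).

Definition pushB (psiH : set C -> R) (q : nat) (F : C -> 'I_q)
  : {set 'I_q} -> R :=
  fun A => psiB psiH (F @^-1` [set i | i \in A]).

Definition quot (q k : nat) (phi : {set 'I_q} -> R) (f : 'I_q -> 'I_k)
  : {set 'I_k} -> R := fun A => phi (f @^-1: A).

Definition edist (k : nat) (x y : {set 'I_k} -> R) : R :=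
  Num.sqrt (\sum_(A : {set 'I_k}) (x A - y A) ^+ 2).

(* Hausdorff distance d_H^(k)(Q_k(phi1), Q_k(phi2)) *)
Definition dH (q1 q2 : nat) (phi1 : {set 'I_q1} -> R) (phi2 : {set 'I_q2} -> R)
  (k : nat) : R :=
  Num.max
    (sup [set inf [set edist (quot phi1 f) (quot phi2 g)
                  | g in [set: 'I_q2 -> 'I_k]] | f in [set: 'I_q1 -> 'I_k]])
    (sup [set inf [set edist (quot phi1 f) (quot phi2 g)
                  | f in [set: 'I_q1 -> 'I_k]] | g in [set: 'I_q2 -> 'I_k]]).

(* d(phi1, phi2) = sum_{k>=1} 2^{-k} d_H^(k)(Q_k phi1, Q_k phi2), as an
   extended real (a series of nonnegative terms). *)
Definition setfun_dist (q1 q2 : nat) (phi1 : {set 'I_q1} -> R)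
  (phi2 : {set 'I_q2} -> R) : \bar R :=
  (\sum_(1 <= k <oo) (((2%:R : R) ^- k * dH phi1 phi2 k)%:E))%E.

End SetFun.

(* Main.v *)
Require Import Defs.
From HB Require Import structures.
From mathcomp Require Import all_boot all_order all_algebra.
From mathcomp Require Import all_classical all_reals all_analysis.
From mathcomp Require Import ring lra zify.
From Stdlib Require Arith.Cantor.
Import Order.TTheory GRing.Theory Num.Theory.
Local Open Scope classical_set_scope.
Local Open Scope ring_scope.

Set Implicit Arguments. Unset Strict Implicit. Unset Printing Implicit Defensive.
Local Notation clopen := Defs.clopen.

Definition cyl (x : C) (n : nat) : set C :=
  [set y : C | forall i, (i < n)%N -> y i = x i].

Lemma cyl_refl (x : C) n : cyl x n x.
Proof. by []. Qed.

Lemma cyl_mono (x : C) m n : (m <= n)%N -> cyl x n `<=` cyl x m.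
Proof. move=> mn y yx i im; apply: yx; exact: leq_trans im mn. Qed.

Lemma cyl_sym (x y : C) n : cyl x n y -> cyl y n x.
Proof. by move=> h i /h ->. Qed.

Lemma cyl_trans (x y z : C) n : cyl x n y -> cyl y n z -> cyl x n z.
Proof. by move=> h1 h2 i ilt; rewrite h2 // h1. Qed.

Lemma cyl_eq (x y : C) n : cyl x n y -> cyl y n = cyl x n.
Proof.
move=> h; rewrite eqEsubset; split => z hz i ilt.
  by rewrite hz // h.
by rewrite hz // h.
Qed.

Lemma nbhs_cyl (x : C) n : nbhs x (cyl x n).
Proof.
elim: n => [|n IH].
  apply: (@filterS _ _ _ setT); last exact: filterT.
  by move=> y _ i; rewrite ltn0.
have -> : cyl x n.+1 = cyl x n `&` (fun y : C => y n) @^-1` [set x n].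
  rewrite eqEsubset; split => y.
    by move=> h; split; [move=> i ilt; apply: h; exact: ltnW|exact: h].
  move=> [h1 h2] i; rewrite ltnS leq_eqVlt => /orP[/eqP->//|]; exact: h1.
apply: filterI => //; apply: open_nbhs_nbhs; split => //.
apply: open_comp; last exact: discrete_open.
move=> y _; exact: (@proj_continuous nat (fun _ => bool) n).
Qed.

Lemma cyl_nbhs (x : C) (U : set C) : nbhs x U -> exists n, cyl x n `<=` U.
Proof.
pose G := filter_from [set: nat] (cyl x).
have GF : Filter G.
  apply: filter_from_filter; first by exists 0%N.
  move=> i j _ _; exists (maxn i j) => //; rewrite subsetI; split;
    apply: cyl_mono; [exact: leq_maxl|exact: leq_maxr].
have Gx : G --> x.
  apply/cvg_sup => N V [W] [[Z] oZ <-] ZxN WV.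
  apply: (filterS WV); exists N.+1 => // y yx /=.
  by rewrite /= (yx N (ltnSn N)).
by move=> /Gx [n _ h]; exists n.
Qed.

Lemma openP (U : set C) : open U <-> forall x, U x -> exists n, cyl x n `<=` U.
Proof.
rewrite openE; split.
  by move=> h x /h; exact: cyl_nbhs.
move=> h x /h [n hn]; exact: (filterS hn (nbhs_cyl x n)).
Qed.

Lemma cyl_open (x : C) n : open (cyl x n).
Proof.
by apply/openP => y hy; exists n; rewrite (cyl_eq hy).
Qed.

Definition findep (S : set C) := exists N, forall z z', cyl z N z' -> S z -> S z'.

Lemma findepC S : findep S -> findep (~` S).
Proof. by move=> [N h]; exists N => z z' hz nz Sz'; apply: nz; apply: h Sz'; exact: cyl_sym. Qed.

Lemma findep_open S : findep S -> open S.
Proof. move=> [N h]; apply/openP => x Sx; exists N => y hy; exact: h hy Sx. Qed.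

Lemma findep_closed S : findep S -> closed S.
Proof. by move=> /findepC /findep_open; rewrite openC. Qed.

Lemma findep_clopen S : findep S -> clopen S.
Proof. by move=> h; split; [exact: findep_open|exact: findep_closed]. Qed.

Lemma compactP (K : set C) : compact K <-> closed K.
Proof.
split; first exact: compact_closed cantor_space_hausdorff.
move=> cK; exact: subclosed_compact cK cantor_space_compact (@subsetT _ K).
Qed.

Lemma clopen_compact (H : set C) : clopen H -> compact H.
Proof. by move=> [_ ?]; apply/compactP. Qed.

Lemma cover_incr (K : set C) (U : nat -> set C) : compact K ->
  (forall n, open (U n)) -> (forall n, U n `<=` U n.+1) ->
  K `<=` \bigcup_n U n -> exists n, K `<=` U n.
Proof.
move=> cK oU incU KU.
have mono m n : (m <= n)%N -> U m `<=` U n.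
  elim: n => [|n IH]; first by rewrite leqn0 => /eqP ->.
  rewrite leq_eqVlt => /orP[/eqP->//|]; rewrite ltnS => /IH h.
  exact: subset_trans h (incU n).
move: cK; rewrite compact_cover => /(_ nat [set: nat] U (fun n _ => oU n) KU).
move=> [D' _ hD']; exists (\max_(i <- finmap.enum_fset D') i) => x /hD' [i iD' Uix].
by apply: (mono i) => //; apply: leq_bigmax_seq.
Qed.

Lemma lebesgue (K : set C) (P : set C -> Prop) : compact K ->
  (forall A B, B `<=` A -> P A -> P B) ->
  (forall x, K x -> exists n, P (cyl x n)) ->
  exists N, forall x, K x -> P (cyl x N).
Proof.
move=> cK Pdown hK.
have h x : exists n, K x -> P (cyl x n).
  have [Kx|nKx] := pselect (K x); last by exists 0%N.
  by have [n hn] := hK x Kx; exists n.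
have [f hf] := choice h.
move: cK; rewrite compact_cover => /(_ C K (fun x => cyl x (f x))
   (fun x _ => cyl_open x (f x))).
case.
  by move=> x Kx; exists x => //.
move=> D' D'K hD'; exists (\max_(i <- finmap.enum_fset D') f i) => y Ky.
have [x xD' hx] := hD' y Ky.
apply: (Pdown (cyl x (f x))); last by apply: hf; have := D'K x xD'; rewrite inE.
rewrite -(cyl_eq hx); apply: cyl_mono.
by apply: leq_bigmax_seq.
Qed.

Lemma clopen_between (K U : set C) : compact K -> open U -> K `<=` U ->
  exists H, [/\ clopen H, K `<=` H & H `<=` U].
Proof.
move=> cK oU KU.
have [N hN] := @lebesgue K (fun A => A `<=` U) cK
  (fun A B BA AU => subset_trans BA AU)
  (fun x Kx => cyl_nbhs (open_nbhs_nbhs (conj oU (KU x Kx)))).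
exists [set y | exists2 x, K x & cyl x N y]; split.
- apply: findep_clopen; exists N => z z' hz [x Kx hx].
  by exists x => //; exact: cyl_trans hx hz.
- by move=> x Kx; exists x.
- by move=> y [x Kx hx]; exact: hN Kx y hx.
Qed.

Lemma decr_closed (L : nat -> set C) (O : set C) :
  (forall n, closed (L n)) -> (forall n, L n.+1 `<=` L n) -> open O ->
  [set z | forall n, L n z] `<=` O -> exists n, L n `<=` O.
Proof.
move=> cL decL oO hO.
have [||||n hn] := @cover_incr (~` O) (fun n => ~` L n).
- by apply/compactP; rewrite -openC setCK.
- by move=> n; rewrite openC.
- by move=> n z nz /decL.
- move=> z nOz; apply: contrapT => hz; apply: nOz; apply: hO => n.
  by apply: contrapT => nLz; apply: hz; exists n.
exists n => z Lz; apply: contrapT => nOz; exact: hn z nOz Lz.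
Qed.


Definition ev (z : C) : C := fun i => z (i.*2).
Definition od (z : C) : C := fun i => z (i.*2.+1).
Definition join (x y : C) : C := fun i => if odd i then y i./2 else x i./2.

Lemma ev_join x y : ev (join x y) = x.
Proof. by apply: functional_extensionality_dep => i; rewrite /ev /join odd_double doubleK. Qed.

Lemma od_join x y : od (join x y) = y.
Proof.
apply: functional_extensionality_dep => i.
rewrite /od /join /= odd_double /=.
by rewrite -[X in y X = _]/(uphalf i.*2) uphalf_double.
Qed.

Lemma reindex_cont (s : nat -> nat) :
  continuous (fun z : C => ((fun i => z (s i)) : C)).
Proof.
move=> x U /= /cyl_nbhs [n hn].
apply: (filterS _ (nbhs_cyl x (\max_(i < n) (s i).+1))) => y hy.
apply: hn => i ilt /=; apply: hy.
have := @leq_bigmax _ (fun i : 'I_n => (s i).+1) (Ordinal ilt).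
by [].
Qed.

Lemma closed_reindex (Phi : C -> C) (s : nat -> nat) (S : set C) :
  (forall z, Phi z = (fun i => z (s i))) -> closed S -> closed [set z | S (Phi z)].
Proof.
move=> hPhi cS.
have -> : [set z | S (Phi z)] = (fun z : C => ((fun i => z (s i)) : C)) @^-1` S.
  by rewrite eqEsubset; split => z /=; rewrite hPhi.
apply: preimage_closed => //; move=> z _; exact: reindex_cont.
Qed.

Definition Good (A : set C) := exists P : nat -> nat -> set C,
  (forall n m, closed (P n m)) /\
  A = [set x | exists y : C, forall n, exists m, P n m (join x y)].

Lemma Good_closed (F : set C) : closed F -> Good F.
Proof.
move=> cF; exists (fun _ _ => [set z | F (ev z)]); split.
  by move=> _ _; apply: (@closed_reindex ev (fun i => i.*2)).
rewrite eqEsubset; split => x /=.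
  by move=> Fx; exists x => n; exists 0%N; rewrite ev_join.
by move=> [y /(_ 0%N) [m]]; rewrite ev_join.
Qed.

Lemma Good_open (U : set C) : open U -> Good U.
Proof.
move=> oU; exists (fun _ m => [set z | cyl (ev z) m `<=` U]); split.
  move=> _ m; apply: findep_closed; exists m.*2 => z z' hz hU y hy.
  apply: hU => i ilt; rewrite hy // /ev hz //.
  by rewrite ltn_double.
rewrite eqEsubset; split => x /=.
  move=> Ux; exists x => n; have [m hm] := (proj1 (openP U) oU) x Ux.
  by exists m; rewrite ev_join.
move=> [y /(_ 0%N) [m]]; rewrite ev_join; apply; exact: cyl_refl.
Qed.

Definition pr1 (n : nat) := (Cantor.of_nat n).1.
Definition pr2 (n : nat) := (Cantor.of_nat n).2.
Definition pair (a b : nat) := Cantor.to_nat (a, b).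

Lemma pr1_pair a b : pr1 (pair a b) = a.
Proof. by rewrite /pr1 /pair Cantor.cancel_of_to. Qed.
Lemma pr2_pair a b : pr2 (pair a b) = b.
Proof. by rewrite /pr2 /pair Cantor.cancel_of_to. Qed.

Definition dec (k : nat) (y : C) : C := fun j => y (pair k j).

Lemma Good_bigcap (A : nat -> set C) : (forall k, Good (A k)) ->
  Good (\bigcap_k A k).
Proof.
move=> hA; have [P hP] := choice hA.
exists (fun n m => [set z | P (pr1 n) (pr2 n) m (join (ev z) (dec (pr1 n) (od z)))]).
split.
  move=> n m; apply: (@closed_reindex _ (fun i => if odd i then
     (pair (pr1 n) i./2).*2.+1 else (i./2).*2)); last exact: (proj1 (hP _)).
  by move=> z; apply: functional_extensionality_dep => i; rewrite /join; case: (odd i).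
rewrite eqEsubset; split => x /=.
  move=> hx.
  have hk k : exists y : C, forall n, exists m, P k n m (join x y).
    by have := hx k I; rewrite (proj2 (hP k)).
  have [Y hY] := choice hk.
  exists (fun i => Y (pr1 i) (pr2 i)) => n.
  have [m hm] := hY (pr1 n) (pr2 n); exists m.
  rewrite ev_join od_join; congr (P _ _ _ (join x _)) : hm.
  by apply: functional_extensionality_dep => j; rewrite /dec pr1_pair pr2_pair.
move=> [y hy] k _; rewrite (proj2 (hP k)); exists (dec k y) => n.
have [m hm] := hy (pair k n); exists m.
by move: hm; rewrite ev_join od_join pr1_pair pr2_pair.
Qed.

Lemma Good_bigcup (A : nat -> set C) : (forall k, Good (A k)) ->
  Good (\bigcup_k A k).
Proof.
move=> hA; have [P hP] := choice hA.
exists (fun n m => [set z | (exists2 i, (i < pr1 m)%N & ev (od z) i) /\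
  (ev (od z) (pr1 n) -> P (pr1 n) (pr2 n) (pr2 m)
     (join (ev z) (dec (pr1 n) (od (od z)))))]).
split.
  move=> n m.
  have -> : [set z | (exists2 i, (i < pr1 m)%N & ev (od z) i) /\
    (ev (od z) (pr1 n) -> P (pr1 n) (pr2 n) (pr2 m)
     (join (ev z) (dec (pr1 n) (od (od z)))))] =
    [set z | exists2 i, (i < pr1 m)%N & ev (od z) i] `&`
    ([set z | ~ ev (od z) (pr1 n)] `|` [set z | P (pr1 n) (pr2 n) (pr2 m)
     (join (ev z) (dec (pr1 n) (od (od z))))]).
    rewrite eqEsubset; split => z /= [h1 h2]; split => //.
      by have [b|nb] := pselect (ev (od z) (pr1 n)); [right; exact: h2|left].
    by case: h2 => // h2 /h2.
  apply: closedI; [|apply: closedU].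
  - apply: findep_closed; exists (pr1 m).*2.*2 => z z' hz [i ilt hi].
    exists i => //; move: hi; rewrite /ev /od hz //.
    by rewrite -!muln2; lia.
  - apply: findep_closed; exists ((pr1 n).*2.*2.+2) => z z' hz hi.
    rewrite /ev /od.
    by move: hi => /=; rewrite /ev /od /= hz.
  - apply: (@closed_reindex _ (fun i => if odd i then
     ((pair (pr1 n) i./2).*2.+1).*2.+1 else (i./2).*2)); last exact: (proj1 (hP _)).
    by move=> z; apply: functional_extensionality_dep => i; rewrite /join; case: (odd i).
rewrite eqEsubset; split => x /=.
  move=> [k _]; rewrite (proj2 (hP k)) => -[yk hyk].
  exists (join (fun i => i == k) (fun i => yk (pr2 i))) => n.
  rewrite ev_join od_join.
  have [nk|nk] := eqVneq (pr1 n) k.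
    have [m2 hm2] := hyk (pr2 n); exists (pair k.+1 m2); split.
      by exists k; rewrite ?pr1_pair // /ev /join odd_double doubleK.
    move=> _; rewrite nk od_join pr2_pair; congr (P _ _ _ (join x _)) : hm2.
    by apply: functional_extensionality_dep => j; rewrite /dec pr2_pair.
  exists (pair k.+1 0); split.
    by exists k; rewrite ?pr1_pair // /ev /join odd_double doubleK.
  by rewrite /ev /join odd_double doubleK (negbTE nk).
move=> [y hy]; have [m0 [[k _ hk] _]] := hy 0%N.
exists k => //; rewrite (proj2 (hP k)); exists (dec k (od y)) => n.
have [m [_ hm]] := hy (pair k n); exists (pr2 m).
by move: hm hk; rewrite ev_join od_join pr1_pair pr2_pair => hm hk; apply: hm.
Qed.

Lemma borel_Good (B : set C) : borel B -> Good B.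
Proof.
suff : borel `<=` [set B | Good B /\ Good (~` B)] by move=> h /h [].
apply: smallest_sub.
  split.
  - split; first by apply: Good_closed; exact: closed0.
    by rewrite setC0; apply: Good_open; exact: openT.
  - by move=> A [h1 h2]; rewrite setTD; split => //; rewrite setCK.
  - move=> A hA; split; first by apply: Good_bigcup => k; case: (hA k).
    by rewrite setC_bigcup; apply: Good_bigcap => k; case: (hA k).
move=> U oU; split; first exact: Good_open.
by apply: Good_closed; rewrite -openC setCK.
Qed.


Lemma clopen0 : clopen set0. Proof. by split; [exact: open0|exact: closed0]. Qed.
Lemma clopenT : clopen setT. Proof. by split; [exact: openT|exact: closedT]. Qed.
Lemma clopenU A B : clopen A -> clopen B -> clopen (A `|` B).
Proof. by move=> [? ?] [? ?]; split; [exact: openU|exact: closedU]. Qed.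
Lemma clopenI A B : clopen A -> clopen B -> clopen (A `&` B).
Proof. by move=> [? ?] [? ?]; split; [exact: openI|exact: closedI]. Qed.

Section Cap.
Variables (R : realType) (psiH : set C -> R).
Hypothesis Hinc : increasing_on_clopen psiH.
Hypothesis Hsub : submodular_on_clopen psiH.
Hypothesis H0 : psiH set0 = 0.

Local Notation psK := (psiK psiH).
Local Notation psB := (psiB psiH).

Lemma psiH_ge0 H : clopen H -> 0 <= psiH H.
Proof. by move=> cH; rewrite -H0; apply: Hinc => //; exact: clopen0. Qed.

Lemma psiH_leT H : clopen H -> psiH H <= psiH setT.
Proof. by move=> cH; apply: Hinc => //; exact: clopenT. Qed.

Let SK K := [set psiH H | H in [set H | clopen H /\ K `<=` H]].

Let SK_ne K : SK K !=set0.
Proof. by exists (psiH setT), setT; split => //; exact: clopenT. Qed.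

Let SK_lb K : has_lbound (SK K).
Proof. by exists 0 => _ [H [cH _] <-]; exact: psiH_ge0. Qed.

Lemma psiK_le K H : clopen H -> K `<=` H -> psK K <= psiH H.
Proof. by move=> cH KH; apply: ge_inf (SK_lb K) _ _; exists H. Qed.

Lemma psiK_approx K e : 0 < e ->
  exists H, [/\ clopen H, K `<=` H & psiH H < psK K + e].
Proof.
move=> e0; have [_ [H [cH KH] <-] h] := inf_adherent e0 (conj (SK_ne K) (SK_lb K)).
by exists H.
Qed.

Lemma psiK_ge0 K : 0 <= psK K.
Proof. by apply: lb_le_inf (SK_ne K) _ => _ [H [cH _] <-]; exact: psiH_ge0. Qed.

Lemma psiK_leT K : psK K <= psiH setT.
Proof. by apply: psiK_le => //; exact: clopenT. Qed.

Lemma psiK_mono K K' : K `<=` K' -> psK K <= psK K'.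
Proof.
move=> KK'; apply: lb_le_inf (SK_ne K') _ => _ [H [cH K'H] <-].
by apply: psiK_le => //; exact: subset_trans KK' K'H.
Qed.

Lemma psiK_ssub X Y : psK (X `|` Y) + psK (X `&` Y) <= psK X + psK Y.
Proof.
apply/ler_addgt0Pr => e e0.
have e20 : 0 < e / 2 by rewrite divr_gt0.
have [H [cH XH hH]] := psiK_approx X e20.
have [H' [cH' YH' hH']] := psiK_approx Y e20.
have h1 : psK (X `|` Y) <= psiH (H `|` H').
  by apply: psiK_le; [exact: clopenU|exact: setUSS].
have h2 : psK (X `&` Y) <= psiH (H `&` H').
  by apply: psiK_le; [exact: clopenI|exact: setISS].
have := Hsub cH cH'.
have -> : e = e / 2 + e / 2 by rewrite -splitr.
lra.
Qed.

Let SB B := [set psK K | K in [set K | compact K /\ K `<=` B]].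

Let SB_ne B : SB B !=set0.
Proof. by exists (psK set0), set0; split => //; exact: compact0. Qed.

Let SB_ub B : has_ubound (SB B).
Proof. by exists (psiH setT) => _ [K _ <-]; exact: psiK_leT. Qed.

Lemma psiB_ge K B : compact K -> K `<=` B -> psK K <= psB B.
Proof. by move=> cK KB; apply: ub_le_sup (SB_ub B) _ _; exists K. Qed.

Lemma psiB_approx B e : 0 < e ->
  exists K, [/\ compact K, K `<=` B & psB B - e < psK K].
Proof.
move=> e0; have [_ [K [cK KB] <-] h] := sup_adherent e0 (conj (SB_ne B) (SB_ub B)).
by exists K.
Qed.

Lemma psiB_mono B B' : B `<=` B' -> psB B <= psB B'.
Proof.
move=> BB'; apply: ge_sup (SB_ne B) _ => _ [K [cK KB] <-].
by apply: psiB_ge => //; exact: subset_trans KB BB'.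
Qed.

Lemma psiB_ge0 B : 0 <= psB B.
Proof. by apply: le_trans (psiK_ge0 set0) _; apply: psiB_ge => //; exact: compact0. Qed.

Lemma psiB_le_clopen H : clopen H -> psB H <= psiH H.
Proof.
by move=> cH; apply: ge_sup (SB_ne H) _ => _ [K [cK KH] <-]; exact: psiK_le.
Qed.

Lemma psiB_ssub_open U V : open U -> open V ->
  psB (U `|` V) + psB (U `&` V) <= psB U + psB V.
Proof.
move=> oU oV; apply/ler_addgt0Pr => e e0.
have e20 : 0 < e / 2 by rewrite divr_gt0.
have [K [cK KUV hK]] := psiB_approx (U `|` V) e20.
have [L [cL LUV hL]] := psiB_approx (U `&` V) e20.
have cKV : compact (K `\` V).
  by apply/compactP; apply: closedI; [exact/compactP|rewrite -openC setCK].
have KVU : K `\` V `<=` U.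
  by move=> x [Kx nVx]; case: (KUV x Kx) => // /nVx.
have [H [cH KVH HU]] := clopen_between cKV oU KVU.
pose K1 := K `&` H; pose K2 := K `\` H.
have cK1 : compact K1 by apply/compactP; apply: closedI; [exact/compactP|case: cH].
have cK2 : compact K2.
  by apply/compactP; apply: closedI; [exact/compactP|rewrite -openC setCK; case: cH].
have K1U : K1 `<=` U by move=> x [_ /HU].
have K2V : K2 `<=` V.
  move=> x [Kx nHx]; apply: contrapT => nVx; apply: nHx; exact: KVH.
have h1 : psK K <= psK ((K1 `|` L) `|` (K2 `|` L)).
  apply: psiK_mono => x Kx; have [Hx|nHx] := pselect (H x).
    by left; left.
  by right; left.
have h2 : psK L <= psK ((K1 `|` L) `&` (K2 `|` L)).
  by apply: psiK_mono => x Lx; split; right.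
have h3 := psiK_ssub (K1 `|` L) (K2 `|` L).
have h4 : psK (K1 `|` L) <= psB U.
  apply: psiB_ge; first exact: compactU.
  by move=> x [/K1U|/LUV[]].
have h5 : psK (K2 `|` L) <= psB V.
  apply: psiB_ge; first exact: compactU.
  by move=> x [/K2V|/LUV[]].
have -> : e = e / 2 + e / 2 by rewrite -splitr.
lra.
Qed.

Lemma psiB_incr_open (U : nat -> set C) r : (forall n, open (U n)) ->
  (forall n, U n `<=` U n.+1) -> (forall n, psB (U n) <= r) ->
  psB (\bigcup_n U n) <= r.
Proof.
move=> oU incU hr; apply: ge_sup (SB_ne _) _ => _ [K [cK KU] <-].
have [n hn] := cover_incr cK oU incU KU.
exact: le_trans (psiB_ge cK hn) (hr n).
Qed.

Definition psiO (X : set C) := inf [set psB U | U in [set U | open U /\ X `<=` U]].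

Let SO X := [set psB U | U in [set U | open U /\ X `<=` U]].
Let SO_ne X : SO X !=set0.
Proof. by exists (psB setT), setT; split => //; exact: openT. Qed.
Let SO_lb X : has_lbound (SO X).
Proof. by exists 0 => _ [U _ <-]; exact: psiB_ge0. Qed.

Lemma psiO_le X U : open U -> X `<=` U -> psiO X <= psB U.
Proof. by move=> oU XU; apply: ge_inf (SO_lb X) _ _; exists U. Qed.

Lemma psiO_approx X e : 0 < e ->
  exists U, [/\ open U, X `<=` U & psB U < psiO X + e].
Proof.
move=> e0; have [_ [U [oU XU] <-] h] := inf_adherent e0 (conj (SO_ne X) (SO_lb X)).
by exists U.
Qed.

Lemma psiB_le_psiO X : psB X <= psiO X.
Proof. by apply: lb_le_inf (SO_ne X) _ => _ [U [oU XU] <-]; exact: psiB_mono. Qed.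

Lemma psiO_mono X Y : X `<=` Y -> psiO X <= psiO Y.
Proof.
move=> XY; apply: lb_le_inf (SO_ne Y) _ => _ [U [oU YU] <-].
by apply: psiO_le => //; exact: subset_trans XY YU.
Qed.

Lemma psiO_incr (X : nat -> set C) r : (forall n, X n `<=` X n.+1) ->
  (forall n, psiO (X n) <= r) -> psiO (\bigcup_n X n) <= r.
Proof.
move=> incX hr; apply/ler_addgt0Pr => e e0.
pose d n : R := e * (2^-1) ^+ n.+1.
have d0 n : 0 < d n by rewrite mulr_gt0 // exprn_gt0 // invr_gt0.
have dS n : d n = 2 * d n.+1.
  by rewrite /d [in RHS]exprS; field.
have h n : exists U, [/\ open U, X n `<=` U & psB U < psiO (X n) + d n].
  exact: psiO_approx.
have [U hU] := choice h.
pose fix V n := if n is m.+1 then V m `|` U m.+1 else U 0%N.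
have oV n : open (V n).
  elim: n => [|n IH]; first by case: (hU 0%N).
  by apply: openU => //; case: (hU n.+1).
have XV n : X n `<=` V n.
  case: n => [|n]; first by case: (hU 0%N).
  by move=> x Xx; right; case: (hU n.+1) => _ /(_ x Xx).
have hV n : psB (V n) <= psiO (X n) + e - d n.
  elim: n => [|n IH].
    have [_ _ h0] := hU 0%N; have := dS 0%N; rewrite /d expr1 mulrC.
    rewrite -[X in X = _]mulr1 => hh.
    have : d 0%N = e / 2 by rewrite /d expr1.
    lra.
  have [oUn XUn hUn] := hU n.+1.
  have h1 := psiB_ssub_open (oV n) oUn.
  have h2 : psiO (X n) <= psB (V n `&` U n.+1).
    apply: psiO_le; first exact: openI.
    by move=> x Xx; split; [exact: XV|apply: XUn; exact: incX].
  have := dS n; rewrite /= in h1 |- *; lra.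
have oUV : open (\bigcup_n V n) by apply: bigcup_open => n _; exact: oV.
apply: le_trans (psiO_le oUV _) _.
  by move=> x [n _ Xx]; exists n => //; exact: XV.
apply: psiB_incr_open => // n.
  by move=> x Vx; left.
have := hV n; have := hr n; have := d0 n; lra.
Qed.

Lemma join_ev_od (z : C) : join (ev z) (od z) = z.
Proof.
apply: functional_extensionality_dep => i; rewrite /join /ev /od.
have := odd_double_half i; case: (odd i) => /= h; congr z.
  by rewrite -[in RHS]h add1n.
by rewrite -[in RHS]h add0n.
Qed.

Definition pi (E : set C) : set C := [set x | exists y, E (join x y)].

Lemma ev_cont : continuous ev.
Proof. exact: (@reindex_cont (fun i => i.*2)). Qed.

Lemma Good_cap_r A r : Good A -> r < psiO A -> r <= psB A.
Proof.
move=> [P [cP ->]] hr.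
pose G := [set z : C | forall n, exists m, P n m z].
pose Q n m := [set z : C | exists2 j, (j <= m)%N & P n j z].
have cQ n m : closed (Q n m).
  elim: m => [|m IH].
    have -> : Q n 0%N = P n 0%N.
      rewrite eqEsubset; split => z; first by case=> j; rewrite leqn0 => /eqP ->.
      by move=> h; exists 0%N.
    exact: cP.
  have -> : Q n m.+1 = Q n m `|` P n m.+1.
    rewrite eqEsubset; split => z.
      case=> j; rewrite leq_eqVlt => /orP[/eqP->|]; first by right.
      by rewrite ltnS => jm Pz; left; exists j.
    by case=> [[j jm Pz]|Pz]; [exists j => //; exact: leqW|exists m.+1].
  exact: closedU.
pose Inv (L : set C) := closed L /\ r < psiO (pi (G `&` L)).
have step L n : Inv L -> exists m, Inv (L `&` Q n m).
  move=> [cL hL]; apply: contrapT => hn.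
  have hm m : psiO (pi (G `&` (L `&` Q n m))) <= r.
    rewrite leNgt; apply/negP => hlt; apply: hn; exists m; split => //.
    exact: closedI.
  have : psiO (pi (G `&` L)) <= r.
    apply: le_trans (psiO_incr _ hm).
      apply: psiO_mono => x [y [Gz Lz]].
      have [m hm'] := Gz n; exists m => //; exists y; split => //; split => //.
      by exists m.
    move=> m x [y [Gz [Lz [j jm Pz]]]]; exists y; split => //; split => //.
    by exists j => //; exact: leqW.
  by rewrite leNgt hL.
have h (p : nat * set C) : exists m, Inv p.2 -> Inv (p.2 `&` Q p.1 m).
  have [hI|hI] := pselect (Inv p.2); last by exists 0%N.
  by have [m hm] := step p.2 p.1 hI; exists m.
have [f hf] := choice h.
pose fix Lseq n := if n is k.+1 then Lseq k `&` Q k (f (k, Lseq k)) else setT.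
have ILseq n : Inv (Lseq n).
  elim: n => [|n IH]; last exact: (hf (n, Lseq n) IH).
  split; first exact: closedT.
  by rewrite setIT.
pose Linf := [set z | forall n, Lseq n z].
have cLinf : closed Linf.
  have -> : Linf = \bigcap_n Lseq n by rewrite eqEsubset; split => z h' n //=; apply: h'.
  by apply: closed_bigI => n _; case: (ILseq n).
have LinfG : Linf `<=` G.
  by move=> z hz n; have [_ [j _ Pz]] := hz n.+1; exists j.
pose K := ev @` Linf.
have cK : compact K.
  apply: continuous_compact; last by apply/compactP.
  by apply: continuous_subspaceT => x; exact: ev_cont.
have KA : K `<=` pi G.
  by move=> _ [z Lz <-]; exists (od z); rewrite join_ev_od; exact: LinfG.
apply: le_trans (psiB_ge cK KA).
rewrite /psiK; apply: lb_le_inf; first exact: SK_ne.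
move=> _ [H [cH KH] <-].
have oO : open (ev @^-1` H).
  by apply: open_comp; [move=> x _; exact: ev_cont|case: cH].
have [|||n hn] := @decr_closed Lseq (ev @^-1` H) _ _ oO.
- by move=> n; case: (ILseq n).
- by move=> n z [].
- by move=> z hz; apply: KH; exists z.
have [_ hI] := ILseq n.
have : pi (G `&` Lseq n) `<=` H.
  by move=> x [y [_ /hn]]; rewrite /= ev_join.
move=> /psiO_mono hle.
have oH : open H by case: cH.
have := psiO_le oH (@subset_refl _ H); have := psiB_le_clopen cH.
move: hI hle; lra.
Qed.

Lemma Good_cap A : Good A -> psiO A <= psB A.
Proof.
move=> gA; rewrite leNgt; apply/negP => hlt.
have := Good_cap_r gA (midf_lt hlt).2.
by rewrite leNgt (midf_lt hlt).1.
Qed.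

End Cap.


Lemma Good_preim (q : nat) (F : C -> 'I_q) (HF : borel_map F) (A : {set 'I_q}) :
  Good (F @^-1` [set i | i \in A]).
Proof.
pose fam k : set C := if insub k is Some i then
   (if i \in A then F @^-1` [set i] else set0) else set0.
have -> : F @^-1` [set i | i \in A] = \bigcup_k fam k.
  rewrite eqEsubset; split => x /=.
    move=> hx; exists (val (F x)) => //; rewrite /fam valK hx //.
  move=> [k _]; rewrite /fam; case: (insub k) => // i.
  by case: ifP => // iA /= ->.
apply: Good_bigcup => k; rewrite /fam; case: (insub k) => [i|].
  by case: ifP => _; [exact: borel_Good|apply: Good_closed; exact: closed0].
by apply: Good_closed; exact: closed0.
Qed.

Section Construct.
Variables (R : realType) (psiH : set C -> R).
Hypothesis Hinc : increasing_on_clopen psiH.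
Hypothesis Hsub : submodular_on_clopen psiH.
Hypothesis H0 : psiH set0 = 0.

Lemma approx_G (q : nat) (F : C -> 'I_q) (HF : borel_map F) (d : R) : 0 < d ->
  exists G : C -> 'I_q, continuous_discrete G /\
    forall A : {set 'I_q}, `|pushB psiH F A - pushB psiH G A| < d.
Proof.
move=> d0.
pose B (A : {set 'I_q}) := F @^-1` [set i | i \in A].
have hU A : exists U, [/\ open U, B A `<=` U & psiB psiH U < psiB psiH (B A) + d].
  have [U [oU BU hU]] := psiO_approx Hinc H0 (B A) d0.
  exists U; split => //; apply: lt_le_trans hU _; rewrite lerD2r.
  exact: Good_cap Hinc Hsub H0 _ (Good_preim HF A).
have hK A : exists K, [/\ compact K, K `<=` B A & psiB psiH (B A) - d < psiK psiH K].
  by have [K0 hK0] := psiB_approx Hinc H0 (B A) d0; exists K0.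
have [U hU'] := choice hU; have [K hK'] := choice hK.
pose W (i : 'I_q) := [set x : C | (forall A : {set 'I_q}, i \in A -> U A x) /\ (forall A : {set 'I_q}, i \notin A -> ~ K A x)].
have hx x : exists n, exists i, cyl x n `<=` W i.
  have hA (A : {set 'I_q}) : exists n, if F x \in A then cyl x n `<=` U A else cyl x n `<=` ~` K A.
    case hFA: (F x \in A).
      have [oU BU _] := hU' A.
      by apply: (proj1 (openP _) oU); apply: BU.
    have [cKA KB _] := hK' A.
    apply: (proj1 (openP _)); first by rewrite openC; apply/compactP.
    by move=> /KB; rewrite /B /= hFA.
  have [nA hnA] := choice hA.
  have hmax (A : {set 'I_q}) : (nA A <= \max_(A0 : {set 'I_q}) nA A0)%N.
    by rewrite (bigD1 A) //= leq_maxl.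
  move: hmax; set M := \max_(A0 : {set 'I_q}) nA A0 => hmax.
  exists M, (F x) => y hy; split.
    move=> A hFA; have := hnA A; rewrite hFA => h; apply: h.
    by move: hy; apply: cyl_mono.
  move=> A /negbTE hFA; have := hnA A; rewrite hFA => h; apply: h.
  by move: hy; apply: cyl_mono.
have [N hN] : exists N, forall x, setT x -> exists i, cyl x N `<=` W i.
  apply: (@lebesgue setT (fun S => exists i, S `<=` W i) cantor_space_compact).
    by move=> S1 S2 S21 [i hi]; exists i; exact: subset_trans S21 hi.
  by move=> x _; exact: hx x.
have [g hg] := choice (fun x => hN x I).
pose tr (x : C) : C := fun j => if (j < N)%N then x j else false.
have trE x : cyl x N (tr x) by move=> j jN; rewrite /tr jN.
have trC x y : cyl x N y -> tr y = tr x.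
  move=> hy; apply: functional_extensionality_dep => j; rewrite /tr.
  by case: ifP => // jN; rewrite hy.
pose G x := g (tr x).
have hG x : cyl x N `<=` W (G x).
  by rewrite -(cyl_eq (trE x)); exact: hg.
exists G; split.
  move=> A'; apply/openP => x hx0; exists N => y hy.
  by rewrite /= /G (trC _ _ hy).
move=> A; rewrite ltr_norml.
have [cKA KB hKA] := hK' A.
have [oUA BU hUA] := hU' A.
have h1 : K A `<=` G @^-1` [set i | i \in A].
  move=> x Kx /=; apply: contrapT => /negP hGA.
  have [_ h] := hG x x (@cyl_refl x N).
  exact: h A hGA Kx.
have h2 : G @^-1` [set i | i \in A] `<=` U A.
  move=> x hGA; have [h _] := hG x x (@cyl_refl x N); exact: h A hGA.
have := psiB_ge Hinc H0 cKA h1.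
have := psiB_mono Hinc H0 h2.
rewrite /pushB -/(B A).
move: hKA hUA; set a := psiB psiH (B A); set b := psiB psiH _.
move=> hKA hUA hb1 hb2.
apply/andP; split; lra.
Qed.

End Construct.


Section Dist.
Variable R : realType.

Lemma card_setT k : #|{set 'I_k}| = (2 ^ k)%N.
Proof. by rewrite -cardsT -powersetT card_powerset cardsT card_ord. Qed.

Lemma edist_bound k (x y : {set 'I_k} -> R) (d : R) :
  (forall A, `|x A - y A| <= d) -> Defs.edist x y <= Num.sqrt (2 ^+ k * d ^+ 2).
Proof.
move=> h; rewrite /edist; apply: ler_wsqrtr.
have : \sum_(A : {set 'I_k}) (x A - y A) ^+ 2 <= \sum_(A : {set 'I_k}) d ^+ 2.
  apply: ler_sum => A _; have h1 := h A; have h0 := normr_ge0 (x A - y A).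
  rewrite -(ger0_norm (sqr_ge0 (x A - y A))) normrX.
  by move: h0 h1; move: (`|x A - y A|) => a; nra.
by rewrite sumr_const card_setT -[d ^+ 2 *+ _]mulr_natl natrX.
Qed.

Lemma quot_bound q k (phi1 phi2 : {set 'I_q} -> R) (d : R) (f : 'I_q -> 'I_k) :
  (forall A, `|phi1 A - phi2 A| <= d) ->
  forall A, `|Defs.quot phi1 f A - Defs.quot phi2 f A| <= d.
Proof. by move=> h A; exact: h. Qed.

Lemma dH_bound q k (phi1 phi2 : {set 'I_q} -> R) (d : R) :
  (forall A, `|phi1 A - phi2 A| <= d) ->
  0 <= Defs.dH phi1 phi2 k.+1 <= Num.sqrt (2 ^+ k.+1 * d ^+ 2).
Proof.
move=> h; set b := Num.sqrt _.
pose f0 : 'I_q -> 'I_k.+1 := fun _ => ord0.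
have ed_ge0 (x y : {set 'I_k.+1} -> R) : 0 <= Defs.edist x y by exact: sqrtr_ge0.
have inner1 (f : 'I_q -> 'I_k.+1) :
  0 <= inf [set Defs.edist (Defs.quot phi1 f) (Defs.quot phi2 g) | g in [set: 'I_q -> 'I_k.+1]] <= b.
  apply/andP; split.
    apply: lb_le_inf; first by exists (Defs.edist (Defs.quot phi1 f) (Defs.quot phi2 f)), f.
    by move=> _ [g _ <-]; exact: ed_ge0.
  apply: le_trans (edist_bound (quot_bound f h)).
  apply: ge_inf; last by exists f.
  by exists 0 => _ [g _ <-]; exact: ed_ge0.
have inner2 (g : 'I_q -> 'I_k.+1) :
  0 <= inf [set Defs.edist (Defs.quot phi1 f) (Defs.quot phi2 g) | f in [set: 'I_q -> 'I_k.+1]] <= b.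
  apply/andP; split.
    apply: lb_le_inf; first by exists (Defs.edist (Defs.quot phi1 g) (Defs.quot phi2 g)), g.
    by move=> _ [f _ <-]; exact: ed_ge0.
  apply: le_trans (edist_bound (quot_bound g h)).
  apply: ge_inf; last by exists g.
  by exists 0 => _ [f _ <-]; exact: ed_ge0.
rewrite /Defs.dH; apply/andP; split.
  rewrite le_max; apply/orP; left.
  apply: le_trans (proj1 (andP (inner1 f0))) _.
  apply: ub_le_sup; last by exists f0.
  by exists b => _ [f _ <-]; case/andP: (inner1 f).
rewrite ge_max; apply/andP; split.
  apply: ge_sup; first by exists (inf [set Defs.edist (Defs.quot phi1 f0) (Defs.quot phi2 g) | g in [set: 'I_q -> 'I_k.+1]]), f0.
  by move=> _ [f _ <-]; case/andP: (inner1 f).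
apply: ge_sup; first by exists (inf [set Defs.edist (Defs.quot phi1 f) (Defs.quot phi2 f0) | f in [set: 'I_q -> 'I_k.+1]]), f0.
by move=> _ [g _ <-]; case/andP: (inner2 g).
Qed.

Lemma term_bound k (d : R) : 0 <= d ->
  (2%:R : R) ^- k * Num.sqrt (2 ^+ k * d ^+ 2) <= d * (3 / 4) ^+ k.
Proof.
move=> d0.
have e : Num.sqrt (2 ^+ k * d ^+ 2) <= d * (3 / 2) ^+ k.
  rewrite -[X in _ <= X]ger0_norm ?mulr_ge0 ?exprn_ge0 // -sqrtr_sqr.
  apply: ler_wsqrtr; rewrite exprMn [X in _ <= X]mulrC.
  apply: ler_wpM2r; first exact: sqr_ge0.
  rewrite exprAC; apply: lerXn2r; rewrite ?nnegrE ?exprn_ge0 // ?expr2; try lra.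

have -> : (3 / 4 : R) = 3 / 2 * 2^-1 by field.
rewrite exprMn exprVn.
apply: le_trans (ler_wpM2l _ e) _; first by rewrite invr_ge0 exprn_ge0.
by rewrite le_eqVlt; apply/orP; left; apply/eqP; ring.
Qed.

Lemma geo_bound n : \sum_(1 <= k < n) (3 / 4 : R) ^+ k <= 3.
Proof.
have h m : \sum_(1 <= k < m.+1) (3 / 4 : R) ^+ k = 3 * (1 - (3 / 4) ^+ m).
  elim: m => [|m IH]; first by rewrite big_geq // expr0 subrr mulr0.
  rewrite big_nat_recr // IH exprS; move: ((3 / 4 : R) ^+ m) => X; rewrite /=; lra.
case: n => [|n]; first by rewrite big_geq.
rewrite h; have hh : 0 <= (3 / 4 : R) ^+ n by apply: exprn_ge0; lra.
lra.
Qed.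

Lemma series_bound q (phi1 phi2 : {set 'I_q} -> R) (d : R) : 0 <= d ->
  (forall A, `|phi1 A - phi2 A| <= d) ->
  (Defs.setfun_dist phi1 phi2 <= (3 * d)%:E)%E.
Proof.
move=> d0 h.
have tb k : (1 <= k)%N ->
    0 <= (2%:R : R) ^- k * Defs.dH phi1 phi2 k <= d * (3 / 4) ^+ k.
  case: k => // k _; have /andP[h0 h1] := dH_bound k h.
  apply/andP; split; first by rewrite mulr_ge0 // invr_ge0 exprn_ge0.
  apply: le_trans (term_bound k.+1 d0).
  by apply: ler_wpM2l h1; rewrite invr_ge0 exprn_ge0.
rewrite /Defs.setfun_dist; apply: lime_le.
  by apply: (@is_cvg_nneseries _ _ xpredT) => n n1 _; rewrite lee_fin; case/andP: (tb n n1).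
apply: nearW => n; rewrite sumEFin lee_fin.
apply: le_trans (_ : \sum_(1 <= k < n) d * (3 / 4) ^+ k <= _).
  by apply: ler_sum_nat => i /andP[i1 _]; case/andP: (tb i i1).
rewrite -mulr_sumr mulrC; apply: ler_wpM2r => //; exact: geo_bound.
Qed.

End Dist.


Unset Implicit Arguments.

Theorem lemma3p9 (R : realType) (psiH : set C -> R)
  (Hinc : increasing_on_clopen psiH) (Hsub : submodular_on_clopen psiH)
  (H0 : psiH set0 = 0)
  (q : nat) (F : C -> 'I_q) (HF : borel_map F)
  (eps : R) (Heps : 0 < eps) :
  exists G : C -> 'I_q, continuous_discrete G /\
    (setfun_dist (pushB psiH F) (pushB psiH G) < eps%:E)%E.
Proof.
have e4 : 0 < eps / 4 by rewrite divr_gt0.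
have [G [cG hG]] := approx_G Hinc Hsub H0 HF e4.
exists G; split => //.
apply: le_lt_trans (series_bound (ltW e4) (fun A => ltW (hG A))) _.
rewrite lte_fin; lra.
Qed.
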